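(* Let $G=(V,E)$ be a finite simple undirected graph with zipper constraint collection $\mathcal{Z}$, let $D\subseteq Z^2$, and let $\mathbb{S}\subseteq D$ be a prescription on $D$. Let $S^+\subseteq V^+$ be a set of vertices of the augmented graph $G^+(\mathbb{S})$, and let $S\subseteq V$ be its distillate. Then $S^+$ is a clique in $G^+(\mathbb{S})$ if and only if $S$ is a clique in $G'=(V,E\setminus(D\setminus\mathbb{S}))$.
   Context: A zipper constraint collection for $G$ is a finite set $\mathcal{Z}=\{(U_1,W_1,y_1),\dots,(U_m,W_m,y_m)\}$, where each $U_i,W_i\in E$ is an edge of $G$ (a 2-element subset of $V$) and each $y_i$ is a label. Let $Z^2=\{U_1,\dots,U_m,W_1,\dots,W_m\}$. A prescription on a domain $D\subseteq Z^2$ is a subset $\mathbb{S}\subseteq D$. Its elements are on pairs, and the elements of $D\setminus\mathbb{S}$ are off pairs. Let $G'=(V,E\setminus(D\setminus\mathbb{S}))$. The augmented graph $G^+(\mathbb{S})=(V^+,E^+)$ has vertex set $V^+=\{[u]:u\in V\}\cup\{[u,w]:\{u,w\}\in\mathbb{S}\}$. Each vertex $[A]$ is a new formal vertex labeled by the set $A$, which is either a singleton $\{u\}$ or a pair $\{u,w\}$. Two distinct vertices $[A],[B]$ are adjacent if and only if $A\cup B$ is a clique in $G'$. The distillate of a set $S^+=\{[A_1],\dots,[A_n]\}\subseteq V^+$ is the set $A_1\cup\dots\cup A_n\subseteq V$. *)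

(* Defs.v *)
From mathcomp Require Import all_boot.
From Stdlib Require List.
Set Implicit Arguments. Unset Strict Implicit. Unset Printing Implicit Defensive.

Definition simple_graph (V : finType) (E : {set {set V}}) : Prop :=
  forall e, e \in E -> #|e| = 2.

Definition zipper_collection (V : finType) (L : Type) (E : {set {set V}})
  (Z : seq ({set V} * {set V} * L)) : Prop :=
  forall t, List.In t Z -> t.1.1 \in E /\ t.1.2 \in E.

Definition Z2 (V : finType) (L : Type) (Z : seq ({set V} * {set V} * L))
  : {set {set V}} :=
  [set X | has (fun t => (t.1.1 == X) || (t.1.2 == X)) Z].

Definition Gprime_edges (V : finType) (E D S : {set {set V}}) : {set {set V}} :=
  E :\: (D :\: S).

Definition clique (V : finType) (F : {set {set V}}) (A : {set V}) : Prop :=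
  forall u w, u \in A -> w \in A -> u != w -> [set u; w] \in F.

(* Vertex set of the augmented graph G^+(S): the formal vertex [A] is
   represented by its label A (a singleton {u} or a pair {u,w} in S). *)
Definition aug_vertices (V : finType) (S : {set {set V}}) : {set {set V}} :=
  [set [set u] | u : V] :|: S.

Definition aug_adj (V : finType) (E D S : {set {set V}}) (A B : {set V}) : Prop :=
  A != B /\ clique (Gprime_edges E D S) (A :|: B).

Definition aug_clique (V : finType) (E D S : {set {set V}}) (Splus : {set {set V}}) : Prop :=
  forall A B, A \in Splus -> B \in Splus -> A != B -> aug_adj E D S A B.

Definition distillate (V : finType) (Splus : {set {set V}}) : {set V} :=
  \bigcup_(A in Splus) A.

(* Main.v *)
Require Import Defs.
From mathcomp Require Import all_boot.
From Stdlib Require List.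

Lemma in_ListIn (T : eqType) (x : T) (s : seq T) : x \in s -> List.In x s.
Proof.
elim: s => //= y s IH; rewrite inE => /orP [/eqP ->|/IH H]; [by left|by right].
Qed.

Lemma has_In (T : Type) (a : pred T) (s : seq T) :
  has a s -> exists t, List.In t s /\ a t.
Proof.
elim: s => //= y s IH /orP [H|/IH [t [tI at_]]]; [by exists y; split; [left|]|].
by exists t; split; [right|].
Qed.

Theorem mainTheorem2 (V : finType) (L : Type) (E : {set {set V}})
  (HE : simple_graph E) (Z : seq ({set V} * {set V} * L))
  (HZ : zipper_collection E Z) (D : {set {set V}}) (HD : D \subset Z2 Z)
  (S : {set {set V}}) (HS : S \subset D)
  (Splus : {set {set V}}) (HSp : Splus \subset aug_vertices S) :
  aug_clique E D S Splus <-> clique (Gprime_edges E D S) (distillate Splus).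
Proof.
split.
- move=> Hc u w /bigcupP [A HA uA] /bigcupP [B HB wB] uw.
  case: (eqVneq A B) => [eAB|nAB]; last first.
    have [_ Hcl] := Hc A B HA HB nAB.
    by apply: Hcl => //; rewrite inE ?uA ?wB ?orbT.
  subst B.
  have := subsetP HSp A HA; rewrite /aug_vertices inE => /orP [/imsetP [x _ ex]|AS].
    by move: uA wB uw; rewrite ex !inE => /eqP -> /eqP ->; rewrite eqxx.
  have AD := subsetP HS A AS.
  have := subsetP HD A AD; rewrite /Z2 inE => /has_In [t [tZ /orP [/eqP et|/eqP et]]].
  + have AE : A \in E by rewrite -et; exact: (proj1 (HZ t tZ)).
    have eA : [set u; w] = A.
      apply/eqP; rewrite eqEcard; apply/andP; split.
        by apply/subsetP => x; rewrite !inE => /orP [/eqP ->|/eqP ->].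
      by rewrite (HE A AE) cards2 uw.
    by rewrite eA /Gprime_edges !inE AE AS.
  + have AE : A \in E by rewrite -et; exact: (proj2 (HZ t tZ)).
    have eA : [set u; w] = A.
      apply/eqP; rewrite eqEcard; apply/andP; split.
        by apply/subsetP => x; rewrite !inE => /orP [/eqP ->|/eqP ->].
      by rewrite (HE A AE) cards2 uw.
    by rewrite eA /Gprime_edges !inE AE AS.
- move=> Hc A B HA HB nAB; split => // u w.
  move=> uAB wAB uw; rewrite !inE in uAB wAB; apply: (Hc u w _ _ uw).
  + by case/orP: uAB => H; apply/bigcupP; [exists A|exists B].
  + by case/orP: wAB => H; apply/bigcupP; [exists A|exists B].
Qed.
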